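(* Let $A$ be a basic connected finite dimensional algebra over an algebraically closed field $k$ with ordinary quiver $Q$ without oriented cycles. Let $\nu\colon kQ\twoheadrightarrow A$ be a presentation, $\varphi_{\alpha,u,\tau}$ a transvection of $kQ$, and $\mu:=\nu\circ\varphi_{\alpha,u,\tau}$. Set $I=\mathsf{Ker}(\nu)$, $J=\mathsf{Ker}(\mu)$ (so $I=\varphi_{\alpha,u,\tau}(J)$). Suppose $\alpha\sim_J u$, and let $p\colon\pi_1(Q,I)\twoheadrightarrow\pi_1(Q,J)$, $[\gamma]_I\mapsto[\gamma]_J$, be the surjective group homomorphism induced by the identity on walks. Then $\theta_\mu=\theta_\nu\circ p^*$, where $p^*\colon\mathsf{Hom}(\pi_1(Q,J),k^+)\hookrightarrow\mathsf{Hom}(\pi_1(Q,I),k^+)$, $f\mapsto f\circ p$. In particular $\mathsf{Im}(\theta_\mu)\subseteq\mathsf{Im}(\theta_\nu)$.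
   Context: Fix a complete set $e_1,\dots,e_n$ of primitive orthogonal idempotents of $A$ indexed by $Q_0=\{1,\dots,n\}$, $E=\bigoplus ke_i$. A presentation is a surjective algebra map $\nu\colon kQ\twoheadrightarrow A$ with admissible kernel ($(kQ^+)^N\subseteq\mathsf{Ker}\,\nu\subseteq(kQ^+)^2$ for some $N\ge2$, $kQ^+$ the arrow ideal) and $\nu(e_i)=e_i$. A bypass is a pair $(\alpha,u)$ with $\alpha$ an arrow and $u$ an oriented path parallel to and distinct from $\alpha$; for $\tau\in k$ the transvection $\varphi_{\alpha,u,\tau}$ is the automorphism of $kQ$ fixing all $e_i$ and all arrows other than $\alpha$ and mapping $\alpha$ to $\alpha+\tau u$. Walks: paths with formal inverse arrows allowed. $\sim_I$ is the smallest equivalence relation on walks with $\alpha\alpha^{-1}\sim_I e_y$, $\alpha^{-1}\alpha\sim_I e_x$ for arrows $\alpha\colon x\to y$, compatible with concatenation, and identifying two paths occurring with nonzero coefficient in a same minimal relation of $I$ (a nonzero $\sum t_iu_i\in I$, $t_i\neq0$, distinct paths, no nonempty proper subsum in $I$). $\pi_1(Q,I)$ is the group of classes of closed walks at a fixed vertex $x_0$. It is known that under the hypothesis $\alpha\sim_J u$ the relation $\sim_I$ is finer than $\sim_J$, so $p$ is well defined and surjective. $\mathsf{HH}^1(A)=Der_0(A)/Int_0(A)$, with $Der_0(A)$ the derivations vanishing on all $e_i$ and $Int_0(A)=\{a\mapsto ea-ae\mid e\in E\}$. Fix a maximal tree $T$ of $Q$, $\gamma_x$ the minimal walk in $T$ from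 $x_0$ to $x$. For a presentation $\nu$ with kernel $I$ and group homomorphism $f\colon\pi_1(Q,I)\to k^+$, $\theta_\nu(f)$ is the class of the derivation $\tilde f$ with $\tilde f(\nu(u))=f([\gamma_y^{-1}u\gamma_x]_I)\nu(u)$ for paths $u$ from $x$ to $y$. *)

(* Defs.v *)
From HB Require Import structures.
From mathcomp Require Import all_boot all_order all_algebra all_field.
Set Implicit Arguments. Unset Strict Implicit. Unset Printing Implicit Defensive.
Import GRing.Theory.
Local Open Scope ring_scope.

Section Quiver.
Variables (n : nat) (Ar : finType) (src tgt : Ar -> 'I_n).

(* An oriented path is a start vertex together with the list of its arrows
   in order of traversal; (x, [::]) is the trivial path e_x.  The path
   alpha_m ... alpha_1 (alpha_1 first) is stored as (x, [:: alpha_1; ...; alpha_m]). *)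
Definition qpath := ('I_n * seq Ar)%type.

Fixpoint pvalid (x : 'I_n) (l : seq Ar) : bool :=
  if l is a :: l' then (src a == x) && pvalid (tgt a) l' else true.

Definition is_qpath (u : qpath) := pvalid u.1 u.2.
Definition qpend (u : qpath) : 'I_n := last u.1 (map tgt u.2).

Definition no_oriented_cycle :=
  forall u : qpath, is_qpath u -> u.2 != [::] -> qpend u != u.1.

(* Walks: letters are arrows (true) or formal inverses of arrows (false);
   again stored as start vertex + letters in order of traversal. *)
Definition letter := (Ar * bool)%type.
Definition lsrc (a : letter) : 'I_n := if a.2 then src a.1 else tgt a.1.
Definition ltgt (a : letter) : 'I_n := if a.2 then tgt a.1 else src a.1.

Fixpoint wvalid (x : 'I_n) (l : seq letter) : bool :=
  if l is a :: l' then (lsrc a == x) && wvalid (ltgt a) l' else true.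

Definition qwalk := ('I_n * seq letter)%type.
Definition is_walk (w : qwalk) := wvalid w.1 w.2.
Definition wstart (w : qwalk) : 'I_n := w.1.
Definition wend (w : qwalk) : 'I_n := last w.1 (map ltgt w.2).
(* wcat w1 w2 : first w1, then w2 (in the paper's composition notation
   this is the walk  w2 w1). *)
Definition wcat (w1 w2 : qwalk) : qwalk := (w1.1, w1.2 ++ w2.2).
Definition winv (w : qwalk) : qwalk :=
  (wend w, rev (map (fun a : letter => (a.1, ~~ a.2)) w.2)).
Definition pwalk (u : qpath) : qwalk := (u.1, map (fun a => (a, true)) u.2).
Definition arrow_path (a : Ar) : qpath := (src a, [:: a]).

Definition closed_at (x0 : 'I_n) (w : qwalk) :=
  [&& is_walk w, wstart w == x0 & wend w == x0].

Definition in_tree (T : {set Ar}) (w : qwalk) := all (fun a : letter => a.1 \in T) w.2.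

Fixpoint reduced (l : seq letter) : bool :=
  if l is a :: l' then
    (if l' is b :: _ then ~~ ((a.1 == b.1) && (a.2 != b.2)) else true) && reduced l'
  else true.

Definition max_tree (T : {set Ar}) :=
  (forall x y : 'I_n, exists w, [/\ is_walk w, wstart w = x, wend w = y & in_tree T w])
  /\ (forall w, is_walk w -> in_tree T w -> reduced w.2 -> w.2 != [::] ->
        wend w != wstart w).

Definition gamma_ok (T : {set Ar}) (x0 : 'I_n) (gamma : 'I_n -> qwalk) :=
  forall x, [/\ is_walk (gamma x), wstart (gamma x) = x0, wend (gamma x) = x,
    in_tree T (gamma x) &
    forall w, is_walk w -> wstart w = x0 -> wend w = x -> in_tree T w ->
      size (gamma x).2 <= size w.2]%N.

Definition bypass (al : Ar) (u : qpath) :=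
  [/\ is_qpath u, u.1 = src al, qpend u = tgt al & u != arrow_path al].

Variables (k : fieldType) (A : falgType k) (e : 'I_n -> A).

Definition primitive_idem (f : A) :=
  f != 0 /\ forall g h : A, g * g = g -> h * h = h -> g * h = 0 -> h * g = 0 ->
    f = g + h -> g = 0 \/ h = 0.

Definition complete_prim_orth_idems :=
  [/\ forall i, e i * e i = e i, forall i j, i != j -> e i * e j = 0,
      \sum_i e i = 1 & forall i, primitive_idem (e i)].

(* A basic: the e_i A are pairwise non-isomorphic *)
Definition basic_alg :=
  forall i j : 'I_n, i != j -> ~ exists a b : A,
    [/\ a = e j * a * e i, b = e i * b * e j, a * b = e j & b * a = e i].

Definition connected_alg :=
  forall c : A, c * c = c -> (forall a, c * a = a * c) -> c = 0 \/ c = 1.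

(* An algebra map kQ -> A fixing the e_i is given by its values on arrows;
   nuPath nu u is the image of the path u. *)
Definition nuPath (nu : Ar -> A) (u : qpath) : A :=
  foldl (fun acc a => nu a * acc) (e u.1) u.2.

(* image of the element  sum_{v in s} t_v v  of kQ *)
Definition lincomb (nu : Ar -> A) (s : seq qpath) (t : qpath -> k) : A :=
  \sum_(v <- s) t v *: nuPath nu v.

Definition is_kQelt (s : seq qpath) := uniq s && all is_qpath s.

Definition presentation (nu : Ar -> A) :=
  [/\ forall a, e (tgt a) * nu a * e (src a) = nu a,
      forall x : A, exists s t, is_kQelt s /\ x = lincomb nu s t,
      (exists2 N, (2 <= N)%N & forall u, is_qpath u -> (N <= size u.2)%N -> nuPath nu u = 0)
    & forall s t, is_kQelt s -> lincomb nu s t = 0 ->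
        forall v, v \in s -> (size v.2 <= 1)%N -> t v = 0].

Definition minrel (nu : Ar -> A) (s : seq qpath) (t : qpath -> k) :=
  [/\ is_kQelt s, s != [::], forall v, v \in s -> t v != 0,
      lincomb nu s t = 0 &
      forall s', subseq s' s -> s' != [::] -> s' != s -> lincomb nu s' t != 0].

Inductive homot (nu : Ar -> A) : qwalk -> qwalk -> Prop :=
| homot_refl w : homot nu w w
| homot_sym w w' : homot nu w w' -> homot nu w' w
| homot_trans w1 w2 w3 : homot nu w1 w2 -> homot nu w2 w3 -> homot nu w1 w3
| homot_cancel_tgt a : homot nu (tgt a, [:: (a, false); (a, true)]) (tgt a, [::])
| homot_cancel_src a : homot nu (src a, [:: (a, true); (a, false)]) (src a, [::])
| homot_rel s t u u' : minrel nu s t -> u \in s -> u' \in s ->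
    homot nu (pwalk u) (pwalk u')
| homot_cat w1 w1' w2 w2' : is_walk w1 -> is_walk w1' -> is_walk w2 -> is_walk w2' ->
    wend w1 = wstart w2 -> wend w1' = wstart w2' ->
    homot nu w1 w1' -> homot nu w2 w2' -> homot nu (wcat w1 w2) (wcat w1' w2').

(* group homomorphisms pi_1(Q, Ker nu) -> k^+, as functions on closed walks
   at x0 that are constant on homotopy classes and additive *)
Definition pi1_hom (nu : Ar -> A) (x0 : 'I_n) (F : qwalk -> k) :=
  (forall w w', closed_at x0 w -> closed_at x0 w' -> homot nu w w' -> F w = F w')
  /\ (forall w w', closed_at x0 w -> closed_at x0 w' -> F (wcat w w') = F w + F w').

(* transvection: mu = nu o phi_{al,u,tau} on arrows *)
Definition transvect (nu : Ar -> A) (al : Ar) (u : qpath) (tau : k) : Ar -> A :=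
  fun b => if b == al then nu al + tau *: nuPath nu u else nu b.

Definition der0 (D : A -> A) :=
  [/\ forall (c : k) a b, D (c *: a + b) = c *: D a + D b,
      forall a b, D (a * b) = D a * b + a * D b & forall i, D (e i) = 0].

Definition int0 (D : A -> A) :=
  exists c : 'I_n -> k, forall a,
    D a = (\sum_i c i *: e i) * a - a * (\sum_i c i *: e i).

(* D is the derivation  tilde f  representing theta_nu(f)  *)
Definition theta_rep (nu : Ar -> A) (gamma : 'I_n -> qwalk) (F : qwalk -> k) (D : A -> A) :=
  der0 D /\ forall u : qpath, is_qpath u ->
    D (nuPath nu u) =
      F (wcat (wcat (gamma u.1) (pwalk u)) (winv (gamma (qpend u)))) *: nuPath nu u.

End Quiver.

(* Main.v *)
Require Import Defs.
From HB Require Import structures.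
From mathcomp Require Import all_boot all_order all_algebra all_field.
Import GRing.Theory.
Local Open Scope ring_scope.
Set Implicit Arguments. Unset Strict Implicit.
Section H.
Variables (n : nat) (Ar : finType) (src tgt : Ar -> 'I_n).

Lemma pvalid_cat x l1 l2 : pvalid src tgt x (l1 ++ l2) =
  pvalid src tgt x l1 && pvalid src tgt (last x (map tgt l1)) l2.
Proof. by elim: l1 x => [|a l IH] x //=; rewrite IH andbA. Qed.

Lemma wvalid_cat x l1 l2 : wvalid src tgt x (l1 ++ l2) =
  wvalid src tgt x l1 && wvalid src tgt (last x (map (ltgt src tgt) l1)) l2.
Proof. by elim: l1 x => [|a l IH] x //=; rewrite IH andbA. Qed.

Lemma wcat_ok w1 w2 : is_walk src tgt w1 -> is_walk src tgt w2 ->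
  wend src tgt w1 = wstart w2 ->
  is_walk src tgt (wcat w1 w2) /\ wend src tgt (wcat w1 w2) = wend src tgt w2.
Proof.
case: w1 w2 => [x1 l1] [x2 l2]; rewrite /is_walk /wend /wstart /wcat /= => h1 h2 he.
by rewrite wvalid_cat h1 he h2 map_cat last_cat he.
Qed.

Lemma pwalk_ok v : is_qpath src tgt v ->
  is_walk src tgt (pwalk v) /\ wend src tgt (pwalk v) = qpend tgt v /\ wstart (pwalk v) = v.1.
Proof.
case: v => x l; rewrite /is_qpath /is_walk /wend /qpend /pwalk /=.
move=> h; split; last split => //.
  by elim: l x h => [|a l IH] x //= /andP[-> /IH].
by rewrite -map_comp.
Qed.

Lemma winv_ok w : is_walk src tgt w ->
  [/\ is_walk src tgt (winv src tgt w), wstart (winv src tgt w) = wend src tgt w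
    & wend src tgt (winv src tgt w) = wstart w].
Proof.
case: w => x l; rewrite /is_walk /wend /wstart /winv /=.
elim: l x => [|a l IH] x //= /andP[/eqP hx hv].
have [h1 h2 h3] := IH _ hv; rewrite /= in h1 h2 h3.
rewrite rev_cons -cats1 wvalid_cat h1 map_cat last_cat h3 /=.
by move: hx {IH hv h1 h2 h3}; rewrite /lsrc /ltgt /wend; case: a => b [] /= ->; rewrite eqxx.
Qed.

End H.

Section Alg.
Variables (n : nat) (Ar : finType) (k : fieldType) (A : falgType k) (e : 'I_n -> A).

Lemma foldl_mulr (nu : Ar -> A) (acc y : A) l :
  foldl (fun acc a => nu a * acc) (acc * y) l = foldl (fun acc a => nu a * acc) acc l * y.
Proof. by elim: l acc => [|a l IH] acc //=; rewrite mulrA IH. Qed.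

Lemma nuPath_e (nu : Ar -> A) (v : qpath n Ar) : e v.1 * e v.1 = e v.1 ->
  nuPath e nu v * e v.1 = nuPath e nu v.
Proof. by move=> h; rewrite /nuPath -foldl_mulr h. Qed.

Lemma nuPath_eq (nu1 nu2 : Ar -> A) (v : qpath n Ar) :
  (forall a, a \in v.2 -> nu1 a = nu2 a) -> nuPath e nu1 v = nuPath e nu2 v.
Proof.
case: v => x l /=; rewrite /nuPath /=; move: (e x).
elim: l => [|a l IH] acc //= h.
rewrite h ?mem_head //; apply: IH => b hb; apply: h; by rewrite in_cons hb orbT.
Qed.

Lemma nuPath_arrow (src : Ar -> 'I_n) (nu : Ar -> A) b :
  nuPath e nu (arrow_path src b) = nu b * e (src b).
Proof. by []. Qed.

Lemma der_eq (nu : Ar -> A) (D1 D2 : A -> A) :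
  der0 e D1 -> der0 e D2 -> (forall b, D1 (nu b) = D2 (nu b)) ->
  forall s t, D1 (lincomb e nu s t) = D2 (lincomb e nu s t).
Proof.
move=> [L1 M1 E1] [L2 M2 E2] hb s t.
have P v : D1 (nuPath e nu v) = D2 (nuPath e nu v).
  case: v => x l; rewrite /nuPath /=.
  have : D1 (e x) = D2 (e x) by rewrite E1 E2.
  move: (e x); elim: l => [|a l IH] acc //= h.
  by apply: IH; rewrite M1 M2 hb h.
have Z (D : A -> A) : (forall a b, D (a * b) = D a * b + a * D b) -> D 0 = 0.
  by move=> M; have := M 0 0; rewrite !mulr0 mul0r addr0.
rewrite /lincomb; elim: s => [|v s IH]; first by rewrite !big_nil (Z _ M1) (Z _ M2).
by rewrite !big_cons L1 L2 P IH.
Qed.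
End Alg.

Lemma al_notin (n : nat) (Ar : finType) (src tgt : Ar -> 'I_n) al u :
  no_oriented_cycle src tgt -> bypass src tgt al u -> al \notin u.2.
Proof.
move=> Hnc; case: u => x l [Hu Hs He Hne] /=; rewrite /= in Hs; subst x.
apply/negP => Hin; case/splitPr: Hin Hu He Hne => l1 l2.
rewrite /is_qpath /= pvalid_cat /= => /and3P[h1 /eqP h2 h3].
rewrite /qpend /= map_cat last_cat /= => he hne.
case: l1 h1 h2 hne => [|a l1] h1 h2 hne.
  case: l2 h3 he hne => [|b l2] h3 he hne; first by rewrite eqxx in hne.
  by have := Hnc (tgt al, b :: l2) h3 isT; rewrite /qpend /=; move: he => /= ->; rewrite eqxx.
by have := Hnc (src al, a :: l1) h1 isT; rewrite /qpend; move: h2 => /= <-; rewrite eqxx.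
Qed.
Theorem proposition3p2 (k : closedFieldType) (n : nat) (Ar : finType)
  (src tgt : Ar -> 'I_n) (A : falgType k) (e : 'I_n -> A) (nu : Ar -> A)
  (al : Ar) (u : qpath n Ar) (tau : k) (T : {set Ar}) (x0 : 'I_n)
  (gamma : 'I_n -> qwalk n Ar) :
  no_oriented_cycle src tgt ->
  complete_prim_orth_idems e -> basic_alg e -> connected_alg A ->
  presentation src tgt e nu ->
  bypass src tgt al u ->
  max_tree src tgt T -> gamma_ok src tgt T x0 gamma ->
  homot src tgt e (transvect e nu al u tau) (pwalk (arrow_path src al)) (pwalk u) ->
  forall F : qwalk n Ar -> k,
    pi1_hom src tgt e (transvect e nu al u tau) x0 F ->
    forall D1 D2 : A -> A,
      theta_rep src tgt e (transvect e nu al u tau) gamma F D1 ->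
      theta_rep src tgt e nu gamma F D2 ->
      int0 e (fun a => D1 a - D2 a).
Proof.
move=> Hnc [Hidem Horth Hsum Hprim] _ _ [Hpe Hsurj _ _] Hbp Htree Hg Hhom F [Finv Fadd]
  D1 D2 [Der1 R1] [Der2 R2].
exists (fun=> 0).
suff HG : forall a, D1 a = D2 a.
  move=> a; rewrite HG subrr big1 ?mul0r ?mulr0 ?subrr // => i _; exact: scale0r.
set mu := transvect e nu al u tau.
have Hnot := al_notin Hnc Hbp.
case: Hbp => Hu Hs Hq Hne.
have Hmu_u : nuPath e mu u = nuPath e nu u.
  apply: nuPath_eq => a ha; rewrite /mu /transvect; case: eqP => // ea.
  by rewrite -ea ha in Hnot.
have Hnb b : nu b * e (src b) = nu b.
  by rewrite -{1}(Hpe b) -(mulrA _ (e (src b))) Hidem Hpe.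
have Hmb b : mu b * e (src b) = mu b.
  rewrite /mu /transvect; case: eqP => [->|_]; last exact: Hnb.
  by rewrite mulrDl Hnb -scalerAl -Hs nuPath_e.
have Hva b : is_qpath src tgt (arrow_path src b) by rewrite /is_qpath /= eqxx.
set W := fun v : qpath n Ar =>
  wcat (wcat (gamma v.1) (pwalk v)) (winv src tgt (gamma (qpend tgt v))).
have Wok v : is_qpath src tgt v ->
  [/\ is_walk src tgt (wcat (gamma v.1) (pwalk v)),
      wend src tgt (wcat (gamma v.1) (pwalk v)) = qpend tgt v & closed_at src tgt x0 (W v)].
  move=> Hv.
  have [g1 g2 g3 _ _] := Hg v.1; have [h1 h2 h3 _ _] := Hg (qpend tgt v).
  have [p1 [p2 p3]] := pwalk_ok Hv; have [i1 i2 i3] := winv_ok h1.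
  have [c1 c2] := wcat_ok g1 p1 (etrans g3 (esym p3)).
  have [d1 d2] := wcat_ok c1 i1 (etrans c2 (etrans p2 (esym (etrans i2 h3)))).
  split => //; first by rewrite c2.
  by apply/and3P; split => //; rewrite ?d2 ?i3 ?h2 //; rewrite /wstart /= -/(wstart _) g2.
have HF : F (W (arrow_path src al)) = F (W u).
  have [a1 a2 a3] := Wok _ (Hva al); have [b1 b2 b3] := Wok _ Hu.
  apply: Finv => //.
  have [g1 g2 g3 _ _] := Hg (src al); have [h1 h2 h3 _ _] := Hg (tgt al).
  have [i1 i2 i3] := winv_ok h1.
  have [p1 [_ p3]] := pwalk_ok (Hva al); have [q1 [_ q3]] := pwalk_ok Hu.
  rewrite /W Hs Hq; rewrite Hs Hq in b1 b2; rewrite Hs in q3.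
  eapply homot_cat; [exact: a1|exact: b1|exact: i1|exact: i1
    |exact: (etrans a2 (esym (etrans i2 h3)))|exact: (etrans b2 (esym (etrans i2 h3)))
    | |exact: homot_refl].
  eapply homot_cat; [exact: g1|exact: g1|exact: p1|exact: q1
    |exact: (etrans g3 (esym p3))|exact: (etrans g3 (esym q3))
    |exact: homot_refl|exact: Hhom].
have Hb b : D1 (nu b) = D2 (nu b).
  have e3 := R2 _ (Hva b); rewrite nuPath_arrow Hnb in e3.
  have e1 := R1 _ (Hva b); rewrite nuPath_arrow Hmb in e1.
  case: (eqVneq b al) e1 e3 => [->|nb] e1 e3; last first.
    by move: e1; rewrite /mu /transvect (negbTE nb) => ->; rewrite e3.
  have e2 := R1 _ Hu; rewrite Hmu_u in e2.
  have muE : mu al = tau *: nuPath e nu u + nu al by rewrite /mu /transvect eqxx addrC.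
  case: Der1 => L1 _ _.
  apply: (addrI (tau *: D1 (nuPath e nu u))).
  rewrite -L1 -muE e1 e2 e3 -/(W (arrow_path src al)) -/(W u) -HF.
  by rewrite muE scalerDr !scalerA mulrC.
move=> a; have [s [t [_ ->]]] := Hsurj a.
exact: der_eq.
Qed.
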